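(* Let $\mathbf{L}\in\mathbb{R}^{n\times n}$ be symmetric and $\mathbf{V}\in\mathbb{R}^{n\times p}$ ($0\le p\le n$) of full column rank, such that $\widetilde{\mathbf{L}}=(\mathbf{I}-\mathbf{Q}\mathbf{Q}^\top)\mathbf{L}(\mathbf{I}-\mathbf{Q}\mathbf{Q}^\top)$ is positive semi-definite, where $\mathbf{Q}\in\mathbb{R}^{n\times p}$ is an orthonormal basis of the column span of $\mathbf{V}$. Let $\sigma^2>0$ and, for $\varepsilon>0$, let $$\mathbf{M}_\varepsilon=(\mathbf{L}+\varepsilon^{-1}\mathbf{V}\mathbf{V}^\top)(\mathbf{L}+\sigma^2\mathbf{I}+\varepsilon^{-1}\mathbf{V}\mathbf{V}^\top)^{-1}.$$ Then as $\varepsilon\to0$, $$\mathbf{M}_\varepsilon=\mathbf{Q}\mathbf{Q}^\top+\widetilde{\mathbf{U}}\widetilde{\boldsymbol\Lambda}(\widetilde{\boldsymbol\Lambda}+\sigma^2\mathbf{I})^{-1}\widetilde{\mathbf{U}}^\top+O(\varepsilon)=\mathbf{Q}\mathbf{Q}^\top+\widetilde{\mathbf{L}}(\widetilde{\mathbf{L}}+\sigma^2\mathbf{I})^{-1}+O(\varepsilon),$$ where $\widetilde{\mathbf{L}}=\widetilde{\mathbf{U}}\widetilde{\boldsymbol\Lambda}\widetilde{\mathbf{U}}^\top$ is the truncated spectral decomposition of $\widetilde{\mathbf{L}}$ ($\widetilde{\boldsymbol\Lambda}$ the diagonal matrix of its nonzero eigenvalues, $\widetilde{\mathbf{U}}$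 the corresponding orthonormal eigenvectors).
   Context: $\mathbf{M}_\varepsilon$ is the smoother matrix of GP regression with covariance matrix $\mathbf{L}+\varepsilon^{-1}\mathbf{V}\mathbf{V}^\top$ and noise variance $\sigma^2$. *)

(* Defs.v *)
From HB Require Import structures.
From mathcomp Require Import all_boot all_order all_algebra.
From mathcomp Require Import reals.
Set Implicit Arguments. Unset Strict Implicit. Unset Printing Implicit Defensive.
Import Order.TTheory GRing.Theory Num.Theory.
Local Open Scope ring_scope.

Definition psdmx (R : realType) (n : nat) (A : 'M[R]_n) : Prop :=
  forall x : 'cV[R]_n, 0 <= (x^T *m A *m x) 0 0.

(* f(eps) = O(eps) as eps -> 0 (eps > 0): entrywise (all norms on a
   finite-dimensional space are equivalent). *)
Definition bigO_eps (R : realType) (m n : nat) (f : R -> 'M[R]_(m, n)) : Prop :=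
  exists C : R, exists delta : R, 0 < delta /\
    forall eps : R, 0 < eps -> eps < delta ->
      forall i j, `|f eps i j| <= C * eps.

Definition smoother (R : realType) (n p : nat) (L : 'M[R]_n) (V : 'M[R]_(n, p))
  (sigma2 eps : R) : 'M[R]_n :=
  (L + eps^-1 *: (V *m V^T)) *m invmx (L + sigma2%:M + eps^-1 *: (V *m V^T)).

Definition Ltilde (R : realType) (n p : nat) (L : 'M[R]_n) (Q : 'M[R]_(n, p)) : 'M[R]_n :=
  (1%:M - Q *m Q^T) *m L *m (1%:M - Q *m Q^T).

(* Main.v *)
Require Import Defs.
From HB Require Import structures.
From mathcomp Require Import all_boot all_order all_algebra.
From mathcomp Require Import reals.
From mathcomp Require Import lra ring.
Import Order.TTheory GRing.Theory Num.Theory.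
Local Open Scope ring_scope.

Section Aux.
Set Implicit Arguments. Unset Strict Implicit.


Section MN.
Variable R : realType.

Definition mnorm m n (A : 'M[R]_(m, n)) : R := \sum_(i < m) \sum_(j < n) `|A i j|.

Lemma mnorm_ge0 m n (A : 'M[R]_(m, n)) : 0 <= mnorm A.
Proof. by apply: sumr_ge0 => i _; apply: sumr_ge0. Qed.

Lemma row_le_sum m n (F : 'I_m -> 'I_n -> R) (i : 'I_m) :
  (forall i j, 0 <= F i j) -> \sum_j F i j <= \sum_i \sum_j F i j.
Proof.
move=> h; rewrite (bigD1 i) //= lerDl; apply: sumr_ge0 => k _.
by apply: sumr_ge0.
Qed.

Lemma entry_le m n (A : 'M[R]_(m, n)) i j : `|A i j| <= mnorm A.
Proof.
apply: le_trans (@row_le_sum _ _ (fun a b => `|A a b|) i _) => //.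
by rewrite (bigD1 j) //= lerDl; apply: sumr_ge0.
Qed.

Lemma mnormD m n (A B : 'M[R]_(m, n)) : mnorm (A + B) <= mnorm A + mnorm B.
Proof.
rewrite /mnorm -big_split /=; apply: ler_sum => i _.
rewrite -big_split /=; apply: ler_sum => j _; rewrite mxE; exact: ler_normD.
Qed.

Lemma mnormZ m n (a : R) (A : 'M[R]_(m, n)) : mnorm (a *: A) = `|a| * mnorm A.
Proof.
rewrite /mnorm mulr_sumr; apply: eq_bigr => i _; rewrite mulr_sumr.
by apply: eq_bigr => j _; rewrite mxE normrM.
Qed.

Lemma mnormN m n (A : 'M[R]_(m, n)) : mnorm (- A) = mnorm A.
Proof.
by apply: eq_bigr => i _; apply: eq_bigr => j _; rewrite mxE normrN.
Qed.

Lemma mnormM m n k (A : 'M[R]_(m, n)) (B : 'M[R]_(n, k)) :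
  mnorm (A *m B) <= mnorm A * mnorm B.
Proof.
rewrite /mnorm mulr_suml; apply: ler_sum => i _.
apply: (@le_trans _ _ (\sum_j \sum_l `|A i l| * `|B l j|)).
  apply: ler_sum => j _; rewrite mxE.
  by apply: le_trans (ler_norm_sum _ _ _) _; apply: ler_sum => l _; rewrite normrM.
rewrite exchange_big /= mulr_suml; apply: ler_sum => l _.
rewrite -mulr_sumr; apply: ler_wpM2l => //.
by apply: (@row_le_sum _ _ (fun a b => `|B a b|) l).
Qed.

Lemma mnorm0_eq m n (A : 'M[R]_(m, n)) : mnorm A <= 0 -> A = 0.
Proof.
move=> h; apply/matrixP => i j; rewrite mxE; apply/eqP.
by rewrite -normr_le0; apply: le_trans (entry_le A i j) h.
Qed.

Lemma mnorm1 n : mnorm (1%:M : 'M[R]_n) = n%:R.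
Proof.
rewrite /mnorm -[n in RHS]card_ord -sumr_const; apply: eq_bigr => i _.
rewrite (bigD1 i) //= big1 ?addr0 => [|j /negPf ji]; rewrite mxE.
  by rewrite eqxx normr1.
by rewrite eq_sym ji normr0.
Qed.

End MN.



Lemma perturb (R : realType) n (H : 'M[R]_n) (eps : R) : 0 <= eps ->
  eps * mnorm H <= 1/2 ->
  (1%:M + eps *: H) \in unitmx /\ mnorm (invmx (1%:M + eps *: H)) <= 2 * n%:R.
Proof.
move=> e0 eH.
have key : forall m (K : 'M[R]_(m, n)) (C : 'M[R]_(m, n)),
    K *m (1%:M + eps *: H) = C -> mnorm K <= mnorm C + mnorm K / 2.
  move=> m K C hK.
  have hK' : K = C - eps *: (K *m H).
    by rewrite -hK mulmxDr mulmx1 -scalemxAr addrK.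
  rewrite {1}hK'; apply: le_trans (mnormD _ _) _; rewrite mnormN mnormZ ger0_norm //.
  rewrite lerD2l; apply: le_trans (ler_wpM2l e0 (mnormM _ _)) _.
  rewrite mulrA (mulrC eps) -mulrA.
  have := mnorm_ge0 K; have := mnorm_ge0 H; nra.
have hu : (1%:M + eps *: H) \in unitmx.
  rewrite -row_free_unit -kermx_eq0; apply/eqP; apply: mnorm0_eq.
  have := key _ _ 0 (mulmx_ker _).
  have -> : mnorm (0 : 'M[R]_(n, n)) = 0.
    by rewrite /mnorm big1 // => i _; rewrite big1 // => j _; rewrite mxE normr0.
  have := mnorm_ge0 (kermx (1%:M + eps *: H)); lra.
split => //.
have := key _ _ _ (mulVmx hu); rewrite mnorm1; lra.
Qed.



Lemma psd_vec (R : realType) n (A : 'M[R]_n) (s : R) (v : 'rV[R]_n) :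
  psdmx A -> 0 < s -> v *m (A + s%:M) = 0 -> v = 0.
Proof.
move=> hA s0 hv; apply/matrixP => i j.
have := hA v^T; rewrite trmxK.
have -> : v *m A *m v^T = - s *: (v *m v^T).
  move: hv; rewrite mulmxDr mul_mx_scalar => /eqP; rewrite addr_eq0 => /eqP ->.
  by rewrite scaleNr mulNmx -scalemxAl.
rewrite !mxE mulNr oppr_ge0 pmulr_rle0 // => hs.
have h0 : \sum_k v 0 k * v^T k 0 = 0.
  apply/eqP; rewrite eq_le hs sumr_ge0 // => k _; rewrite !mxE; by rewrite -expr2 sqr_ge0.
move/eqP: h0; rewrite psumr_eq0 => [/allP/(_ j (mem_index_enum _))|k _]; rewrite !mxE.
  by rewrite mulf_eq0 orbb (ord1 i) => /eqP ->.
by rewrite -expr2 sqr_ge0.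
Qed.

Lemma psd_unit (R : realType) n (A : 'M[R]_n) (s : R) :
  psdmx A -> 0 < s -> A + s%:M \in unitmx.
Proof.
move=> hA s0; rewrite -row_free_unit -kermx_eq0; apply/eqP; apply/row_matrixP => i.
rewrite row0; apply: (psd_vec hA s0).
by rewrite -row_mul mulmx_ker row0.
Qed.

Lemma addid (V : zmodType) (x a P b : V) : x - a - P - (x - b) = -(a - (b - P)).
Proof. by rewrite -(addrA x) (addrC x) addrKA opprK opprB addrC -addrA (addrC (-P)) (addrC (-a)) addrAC. Qed.

Lemma core (R : realType) (n p : nat)
  (L : 'M[R]_n) (V : 'M[R]_(n, p)) (Q : 'M[R]_(n, p)) (s : R) :
  Q^T *m Q = 1%:M ->
  (Q^T == V^T)%MS ->
  psdmx (Ltilde L Q) ->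
  0 < s ->
  bigO_eps (fun eps => smoother L V s eps - Q *m Q^T
             - Ltilde L Q *m invmx (Ltilde L Q + s%:M)).
Proof.
move=> hQ hQV hpsd s0.
set P := Q *m Q^T.
set P' := 1%:M - P.
have PP : P *m P = P by rewrite /P mulmxA -(mulmxA Q) hQ mulmx1.
have P'Q : P' *m Q = 0 by rewrite /P' mulmxBl mul1mx -mulmxA hQ mulmx1 subrr.
have QtP : Q^T *m P = Q^T by rewrite /P mulmxA hQ mul1mx.
have QtP' : Q^T *m P' = 0 by rewrite /P' mulmxBr mulmx1 QtP subrr.
have PP' : P *m P' = 0 by rewrite /P' mulmxBr mulmx1 PP subrr.
have P'P : P' *m P = 0 by rewrite /P' mulmxBl mul1mx PP subrr.
have P'P' : P' *m P' = P' by rewrite {1}/P' mulmxBl mul1mx PP' subr0.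
set Lt := Ltilde L Q in hpsd *.
have LtE : Lt = P' *m L *m P' by [].
have P'E : P' = 1%:M - P by [].
have PE : P = Q *m Q^T by [].
clearbody P' Lt P.
have LtP : Lt *m P = 0 by rewrite LtE -!mulmxA P'P !mulmx0.
have PLt : P *m Lt = 0 by rewrite LtE !mulmxA PP' !mul0mx.
have sn0 : s != 0 by rewrite gt_eqF.
set LtS := Lt + s%:M.
have hLtS : LtS \in unitmx := psd_unit hpsd s0.
set Z := invmx LtS.
have ZP : Z *m P = s^-1 *: P.
  have h : LtS *m P = s *: P by rewrite /LtS mulmxDl LtP add0r mul_scalar_mx.
  have := mulKmx hLtS P; rewrite h -scalemxAr => e.
  by rewrite -[in RHS]e scalerA mulVf // scale1r.
have PZ : P *m Z = s^-1 *: P.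
  have h : P *m LtS = s *: P by rewrite /LtS mulmxDr PLt add0r mul_mx_scalar.
  have := mulmxK hLtS P; rewrite h -scalemxAl => e.
  by rewrite -[in RHS]e scalerA mulVf // scale1r.
set G := P' *m Z *m P'.
have GE : G = Z - s^-1 *: P.
  rewrite /G P'E !(mulmxBl, mulmxBr, mul1mx, mulmx1) ZP PZ -scalemxAl PP.
  by rewrite opprB addrA subrK.
have GdE : G = P' *m Z *m P' by [].
clearbody G.
have [X hX] : exists X : 'M[R]_p, V^T = X *m Q^T.
  by apply/submxP; case/andP: hQV.
have [Y hY] : exists Y : 'M[R]_p, Q^T = Y *m V^T.
  by apply/submxP; case/andP: hQV.
have YX : Y *m X = 1%:M.
  have := congr1 (mulmx^~ Q) hY; rewrite /= hQ hX mulmxA -(mulmxA _ _ Q) hQ mulmx1.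
  by move=> <-.
have hXu : X \in unitmx := (mulmx1_unit YX).2.
set W := X^T *m X.
have hWu : W \in unitmx by rewrite unitmx_mul unitmx_tr hXu.
have hV : V = Q *m X^T by rewrite -[V]trmxK hX trmx_mul trmxK.
have VVt : V *m V^T = Q *m W *m Q^T by rewrite hV trmx_mul trmxK /W !mulmxA.
clearbody W.
set E0 := (L + s%:M) *m P' + Q *m W *m Q^T.
have GQ : G *m Q = 0 by rewrite GdE -mulmxA P'Q mulmx0.
have e1 : P' *m (L + s%:M) *m P' = LtS - s *: P.
  rewrite mulmxDr mul_mx_scalar mulmxDl -scalemxAl P'P' -LtE P'E scalerBr scalemx1.
  by rewrite /LtS addrA.
have GE0 : G *m E0 = P'.
  rewrite /E0 mulmxDr !mulmxA GQ !mul0mx addr0.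
  have -> : G *m (L + s%:M) *m P' = P' *m Z *m (P' *m (L + s%:M) *m P') by rewrite GdE !mulmxA.
  rewrite e1 -mulmxA mulmxBr mulVmx // -scalemxAr ZP scalerA mulfV // scale1r -P'E.
  exact: P'P'.
have QtE0 : Q^T *m E0 = Q^T *m (L + s%:M) *m P' + W *m Q^T.
  by rewrite /E0 mulmxDr !mulmxA hQ mul1mx.
have E0E : E0 = (L + s%:M) *m P' + Q *m W *m Q^T by [].
clearbody E0.
set iW := invmx W.
set Xl := G + Q *m iW *m Q^T - Q *m iW *m Q^T *m (L + s%:M) *m G.
have XlE0 : Xl *m E0 = 1%:M.
  rewrite /Xl mulmxBl mulmxDl GE0 -[_ *m G *m E0]mulmxA GE0 -[_ *m Q^T *m E0]mulmxA QtE0.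
  rewrite mulmxDr !mulmxA -[Q *m iW *m W]mulmxA mulVmx // mulmx1 -PE.
  by rewrite addrA addrAC addrK P'E subrK.
have hE0u : E0 \in unitmx := (mulmx1_unit XlE0).2.
set E0i := invmx E0.
have P'E0i : P' *m E0i = G by rewrite -GE0 -mulmxA mulmxV // mulmx1.
set F := (L + s%:M) *m P.
set H := E0i *m F.
have EM : forall eps : R, E0 *m (1%:M + eps *: H) = E0 + eps *: F.
  by move=> eps; rewrite mulmxDr mulmx1 -scalemxAr /H mulmxA mulmxV // mul1mx.
exists (s * mnorm (P - P' *m H) * (2 * n%:R) * mnorm E0i), (1 / (2 * (mnorm H + 1))).
have hH := mnorm_ge0 H.
split; first by apply: divr_gt0 => //; lra.
move=> eps e0 ed i j.
have eH : eps * mnorm H <= 1/2.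
  have : eps * (2 * (mnorm H + 1)) < 1 by rewrite -ltr_pdivlMr //; lra.
  nra.
have [hMu hN] := perturb (ltW e0) eH.
set M := 1%:M + eps *: H.
set N := invmx M.
set B := L + s%:M + eps^-1 *: (V *m V^T).
set D := P' + eps *: P.
have en0 : eps != 0 by rewrite gt_eqF.
have BD : B *m D = E0 + eps *: F.
  rewrite /B VVt mulmxDl /D mulmxDr -scalemxAr.
  have -> : eps^-1 *: (Q *m W *m Q^T) *m (P' + eps *: P) = Q *m W *m Q^T.
    rewrite mulmxDr -!scalemxAl -scalemxAr -!mulmxA QtP' QtP !mulmx0 scaler0 add0r.
    by rewrite scalerA mulVf // scale1r !mulmxA.
  by rewrite E0E addrAC.
have hB : B *m (D *m N *m E0i) = 1%:M.
  by rewrite !mulmxA BD -EM -(mulmxA E0 M N) mulmxV // mulmx1 mulmxV.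
have hBu : B \in unitmx := (mulmx1_unit hB).1.
have BinvE : invmx B = D *m N *m E0i by rewrite -[RHS](mulKmx hBu) hB mulmx1.
have smE : smoother L V s eps = 1%:M - s *: invmx B.
  rewrite /smoother -/B.
  have -> : L + eps^-1 *: (V *m V^T) = B - s%:M by rewrite /B addrAC addrK.
  by rewrite mulmxBl mulmxV // mul_scalar_mx.
have LtZ : Lt *m Z = 1%:M - s *: Z.
  have -> : Lt = LtS - s%:M by rewrite /LtS addrK.
  by rewrite mulmxBl mulmxV // mul_scalar_mx.
have hN1 : N = 1%:M - eps *: (H *m N).
  have := mulmxV hMu; rewrite -/N mulmxDl mul1mx -scalemxAl => <-.
  by rewrite addrK.
have P'N : P' *m N = P' - eps *: (P' *m H *m N).
  by rewrite {1}hN1 mulmxBr mulmx1 -scalemxAr mulmxA.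
have e2 : invmx B - G = eps *: ((P - P' *m H) *m N *m E0i).
  rewrite BinvE /D -P'E0i !mulmxDl P'N !mulmxBl -!scalemxAl !mulNmx scalerDr scalerN.
  by rewrite addrAC [_ - eps *: _ - _]addrAC subrr add0r addrC.

have sG : s *: Z - P = s *: G by rewrite GE scalerBr scalerA mulfV // scale1r.
have tE : smoother L V s eps - P - Lt *m Z = - ((s * eps) *: ((P - P' *m H) *m N *m E0i)).
  by rewrite smE LtZ addid sG -scalerBr e2 scalerA.
rewrite tE; apply: le_trans (entry_le _ i j) _.
rewrite mnormN mnormZ ger0_norm; last by apply: mulr_ge0; lra.
have h1 := mnormM (P - P' *m H) N.
have h2 := mnormM ((P - P' *m H) *m N) E0i.
have g1 := mnorm_ge0 (P - P' *m H).
have g2 := mnorm_ge0 E0i.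
have g3 := mnorm_ge0 N.
set a := mnorm (P - P' *m H) in h1 g1 *.
set b := mnorm E0i in h2 g2 *.
set c := mnorm N in hN h1 g3 *.
set d := mnorm ((P - P' *m H) *m N) in h1 h2 *.
set e := mnorm (_ *m E0i) in h2 *.
have : e <= a * (2 * n%:R) * b.
  apply: le_trans h2 _; apply: ler_wpM2r => //; apply: le_trans h1 _.
  by apply: ler_wpM2l.
move=> he.
have -> : s * a * (2 * n%:R) * b * eps = s * eps * (a * (2 * n%:R) * b) by ring.
apply: ler_wpM2l => //; apply: mulr_ge0; lra.
Qed.









Lemma diag_id (R : realType) n r (Lt : 'M[R]_n) (U : 'M[R]_(n, r)) (d : 'rV[R]_r) (s : R) :
  psdmx Lt -> 0 < s -> U^T *m U = 1%:M -> Lt = U *m diag_mx d *m U^T ->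
  U *m diag_mx d *m invmx (diag_mx d + s%:M) *m U^T = Lt *m invmx (Lt + s%:M).
Proof.
move=> hpsd s0 hU hLt.
set D := diag_mx d in hLt *.
have DE : D = U^T *m Lt *m U.
  by rewrite hLt !mulmxA hU mul1mx -mulmxA hU mulmx1.
have psdD : psdmx D.
  move=> x; rewrite DE; have := hpsd (U *m x); by rewrite trmx_mul !mulmxA.
have hDu := psd_unit psdD s0.
have hLu := psd_unit hpsd s0.
rewrite -[LHS](mulmxK hLu); congr (_ *m _).
have e : U *m D *m U^T = U *m D *m invmx (D + s%:M) *m (D + s%:M) *m U^T.
  by rewrite -(mulmxA (U *m D)) mulVmx // mulmx1.
rewrite hLt [RHS]e mulmxDr mul_mx_scalar mulmxDr mulmxDl mul_mx_scalar.
by rewrite -!mulmxA (mulmxA U^T U) hU mul1mx -scalemxAl -!mulmxA.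
Qed.

End Aux.

Theorem mainTheorem7 (R : realType) (n p : nat)
  (L : 'M[R]_n) (V : 'M[R]_(n, p)) (Q : 'M[R]_(n, p)) (sigma2 : R) :
  (p <= n)%N ->
  L^T = L ->
  \rank V = p ->
  Q^T *m Q = 1%:M ->
  (Q^T == V^T)%MS ->
  psdmx (Ltilde L Q) ->
  0 < sigma2 ->
  (forall (r : nat) (U : 'M[R]_(n, r)) (d : 'rV[R]_r),
      U^T *m U = 1%:M ->
      (forall i, d 0 i != 0) ->
      Ltilde L Q = U *m diag_mx d *m U^T ->
      bigO_eps (fun eps => smoother L V sigma2 eps - Q *m Q^T
                 - U *m diag_mx d *m invmx (diag_mx d + sigma2%:M) *m U^T))
  /\
  bigO_eps (fun eps => smoother L V sigma2 eps - Q *m Q^T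
             - Ltilde L Q *m invmx (Ltilde L Q + sigma2%:M)).
Proof.
move=> _ _ _ hQ hQV hpsd s0.
have hc := core hQ hQV hpsd s0.
split => // r U d hU _ hLt.
by rewrite (diag_id hpsd s0 hU hLt).
Qed.
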